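(* Let $(x_i,v_i)_{i=1}^N$ be differentiable functions of $t$ (on some time interval) with values in $\mathbb{R}^3$, satisfying $\dot x_i=v_i$ for all $i\in\{1,\dots,N\}$. Assume that, for all $i,j\in\{1,\dots,N\}$ and all times considered, $$\|x_i\|=1,\quad \langle v_i,x_i\rangle=0,\quad \|v_i\|\le\mathcal{V}_{max},\quad x_i+x_j\ne0.$$ Then, for a positive constant $C$ independent of $t$, $$\bigg\|\frac{d}{dt}\Big[\frac{1}{1+\langle x_i,x_j\rangle}(x_i\times x_j)(x_i\times x_j)^T\Big]\bigg\|\le\frac{C}{\|x_i+x_j\|}\mathcal{V}_{max}.$$
   Context: $\|\cdot\|$ is the Euclidean norm on vectors and the induced matrix norm on $3\times3$ matrices; $\times$ is the cross product; vectors are columns; $\mathcal{V}_{max}\ge0$ is a constant. *)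

(* Defs.v *)
From HB Require Import structures.
From mathcomp Require Import all_boot all_order all_algebra.
From mathcomp Require Import all_classical all_reals all_analysis.
Set Implicit Arguments. Unset Strict Implicit. Unset Printing Implicit Defensive.
Import Order.TTheory GRing.Theory Num.Theory.
Import numFieldNormedType.Exports.
Local Open Scope classical_set_scope.
Local Open Scope ring_scope.

Section Defs.
Variable R : realType.

Definition dot3 (u w : 'cV[R]_3) : R := \sum_(k < 3) u k 0 * w k 0.

Definition enorm3 (u : 'cV[R]_3) : R := Num.sqrt (dot3 u u).

Definition cross3 (u w : 'cV[R]_3) : 'cV[R]_3 :=
  \col_(k < 3)
    (if k == 0 :> nat then u 1 0 * w 2 0 - u 2 0 * w 1 0
     else if k == 1 :> nat then u 2 0 * w 0 0 - u 0 0 * w 2 0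
     else u 0 0 * w 1 0 - u 1 0 * w 0 0).

Definition opnorm3 (A : 'M[R]_3) : R :=
  sup [set enorm3 (A *m u) | u in [set u : 'cV[R]_3 | enorm3 u <= 1]].

Definition Pmat (a b : 'cV[R]_3) : 'M[R]_3 :=
  (1 + dot3 a b)^-1 *: (cross3 a b *m (cross3 a b)^T).
End Defs.

(* Main.v *)
Require Import Defs.
From HB Require Import structures.
From mathcomp Require Import all_boot all_order all_algebra.
From mathcomp Require Import all_classical all_reals all_analysis.
From mathcomp Require Import ring lra.
Import Order.TTheory GRing.Theory Num.Theory.
Import numFieldNormedType.Exports.
Local Open Scope classical_set_scope.
Local Open Scope ring_scope.

Section S.
Variable R : realType.

Lemma sum3 (F : 'I_3 -> R) : \sum_(k < 3) F k = F 0 + F 1 + F 2.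
Proof. by rewrite !big_ord_recr big_ord0 /= add0r; congr (_ + _ + _); apply: congr1; apply: val_inj. Qed.

Lemma dot3E (u w : 'cV[R]_3) : dot3 u w = u 0 0 * w 0 0 + u 1 0 * w 1 0 + u 2 0 * w 2 0.
Proof. by rewrite /dot3 sum3. Qed.

Lemma isdM (f g : R -> R) (df dg t : R) : is_derive t 1 f df -> is_derive t 1 g dg ->
  is_derive t 1 (fun s => f s * g s) (f t * dg + g t * df).
Proof. move=> Hf Hg. exact: (is_deriveM Hf Hg). Qed.

Lemma isdD (f g : R -> R) (df dg t : R) : is_derive t 1 f df -> is_derive t 1 g dg ->
  is_derive t 1 (fun s => f s + g s) (df + dg).
Proof. move=> Hf Hg. exact: (is_deriveD Hf Hg). Qed.

Lemma isdB (f g : R -> R) (df dg t : R) : is_derive t 1 f df -> is_derive t 1 g dg ->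
  is_derive t 1 (fun s => f s - g s) (df - dg).
Proof. move=> Hf Hg. exact: (is_deriveB Hf Hg). Qed.

Lemma isdC (c t : R) : is_derive t 1 (fun _ : R => c) 0.
Proof. exact: is_derive_cst. Qed.

Lemma isdV (f : R -> R) (df t : R) : f t != 0 -> is_derive t 1 f df ->
  is_derive t 1 (fun s => (f s)^-1) (- (f t)^-2 * df).
Proof.
move=> H Hf; apply: DeriveDef; first exact: derivableV.
by rewrite deriveV // derive_val.
Qed.

Lemma isd_entry (a : R -> 'cV[R]_3) (da : 'cV[R]_3) (t : R) k :
  is_derive t 1 a da -> is_derive t 1 (fun s => a s k 0) (da k 0).
Proof.
move=> H; have Hd := @ex_derive _ _ _ _ _ _ _ H.
have Hv := @derive_val _ _ _ _ _ _ _ H.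
apply: DeriveDef; first by move/derivable_mxP: Hd; apply.
by rewrite -Hv derive_mx // mxE.
Qed.

Lemma isd_dot (a b : R -> 'cV[R]_3) (da db : 'cV[R]_3) (t : R) :
  is_derive t 1 a da -> is_derive t 1 b db ->
  is_derive t 1 (fun s => dot3 (a s) (b s)) (dot3 da (b t) + dot3 (a t) db).
Proof.
move=> Ha Hb.
have E : (fun s => dot3 (a s) (b s)) = (fun s => (a s 0 0 * b s 0 0 + a s 1 0 * b s 1 0) + a s 2 0 * b s 2 0).
  by apply: funext => s; rewrite dot3E.
rewrite E; apply: is_derive_eq.
  apply: isdD; first apply: isdD; apply: isdM; exact: isd_entry.
rewrite !dot3E; ring.
Qed.

Lemma isd_cross (a b : R -> 'cV[R]_3) (da db : 'cV[R]_3) (t : R) k :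
  is_derive t 1 a da -> is_derive t 1 b db ->
  is_derive t 1 (fun s => cross3 (a s) (b s) k 0) (cross3 da (b t) k 0 + cross3 (a t) db k 0).
Proof.
move=> Ha Hb.
have E : (fun s => cross3 (a s) (b s) k 0) =
  (fun s => if k == 0 :> nat then a s 1 0 * b s 2 0 - a s 2 0 * b s 1 0
     else if k == 1 :> nat then a s 2 0 * b s 0 0 - a s 0 0 * b s 2 0
     else a s 0 0 * b s 1 0 - a s 1 0 * b s 0 0).
  by apply: funext => s; rewrite mxE.
rewrite E !mxE; case: eqP => _; [|case: eqP => _];
  (apply: is_derive_eq; [apply: isdB; apply: isdM; exact: isd_entry| cbv beta; ring]).
Qed.

Definition dPent (a b da db : 'cV[R]_3) (k l : 'I_3) : R :=
  let s := 1 + dot3 a b in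
  let ds := dot3 da b + dot3 a db in
  let c := cross3 a b in
  let dc := cross3 da b + cross3 a db in
  (c k 0 * c l 0) * (- s^-2 * ds) + s^-1 * (c k 0 * dc l 0 + c l 0 * dc k 0).

Lemma isd_P (a b : R -> 'cV[R]_3) (da db : 'cV[R]_3) (t : R) k l :
  is_derive t 1 a da -> is_derive t 1 b db -> 1 + dot3 (a t) (b t) != 0 ->
  is_derive t 1 (fun s => Pmat (a s) (b s) k l) (dPent (a t) (b t) da db k l).
Proof.
move=> Ha Hb Hs.
have E : (fun s => Pmat (a s) (b s) k l) =
  (fun s => (1 + dot3 (a s) (b s))^-1 * (cross3 (a s) (b s) k 0 * cross3 (a s) (b s) l 0)).
  apply: funext => s; rewrite /Pmat !mxE big_ord1 !mxE //.
rewrite E; apply: is_derive_eq.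
  apply: isdM.
    apply: isdV; first exact: Hs.
    apply: isdD; exact: isd_dot.
  by apply: isdM; exact: isd_cross.
rewrite /dPent !mxE; cbv beta; ring.
Qed.



Lemma ord3_cases (k : 'I_3) : k = 0 \/ k = 1 \/ k = 2.
Proof.
case: k => [[|[|[|k]]] Hk]; [left|right;left|right;right|by []]; exact: val_inj.
Qed.

Lemma dot_ge0 (u : 'cV[R]_3) : 0 <= dot3 u u.
Proof. rewrite dot3E; nra. Qed.

Lemma enorm_sq (u : 'cV[R]_3) : enorm3 u ^+ 2 = dot3 u u.
Proof. by rewrite /enorm3 sqr_sqrtr // dot_ge0. Qed.

Lemma coord_le (u : 'cV[R]_3) k : `|u k 0| <= enorm3 u.
Proof.
rewrite /enorm3 -sqrtr_sqr ler_sqrt ?dot_ge0 // dot3E.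
by case: (ord3_cases k) => [->|[->|->]]; nra.
Qed.

Lemma enorm_le_sum (u : 'cV[R]_3) : enorm3 u <= `|u 0 0| + `|u 1 0| + `|u 2 0|.
Proof.
have H : 0 <= `|u 0 0| + `|u 1 0| + `|u 2 0| by rewrite !addr_ge0.
rewrite /enorm3 -(ger0_norm H) -sqrtr_sqr ler_sqrt; last by apply: sqr_ge0.
rewrite dot3E.
have h0 := real_normK (num_real (u 0 0)).
have h1 := real_normK (num_real (u 1 0)).
have h2 := real_normK (num_real (u 2 0)).
have p0 := normr_ge0 (u 0 0). have p1 := normr_ge0 (u 1 0). have p2 := normr_ge0 (u 2 0).

have := mulr_ge0 p0 p1; have := mulr_ge0 p0 p2; have := mulr_ge0 p1 p2.
move: h0 h1 h2; rewrite !expr2 => h0 h1 h2. nra.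
Qed.

Lemma enorm_gt0 (u : 'cV[R]_3) : u != 0 -> 0 < enorm3 u.
Proof.
move=> Hu; rewrite /enorm3 sqrtr_gt0 lt_def dot_ge0 andbT.
apply: contra Hu => /eqP H; apply/eqP/matrixP => k l.
rewrite (ord1 l) mxE; move: H; rewrite dot3E => H.
have Q0 : u 0 0 = 0 by nra.
have Q1 : u 1 0 = 0 by nra.
have Q2 : u 2 0 = 0 by nra.
by case: (ord3_cases k) => [->|[->|->]].
Qed.
Arguments enorm_gt0 {u}.

Lemma unit_dot (u : 'cV[R]_3) : enorm3 u = 1 -> dot3 u u = 1.
Proof. by move=> H; rewrite -enorm_sq H expr1n. Qed.
Arguments unit_dot {u}.

Lemma prodb (x y p q : R) : `|x| <= p -> `|y| <= q -> `|x * y| <= p * q.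
Proof. by move=> Hx Hy; rewrite normrM ler_pM. Qed.
Arguments prodb {x y p q}.

Lemma crossb (x y z w al be : R) : `|x| <= al -> `|y| <= al -> `|z| <= be -> `|w| <= be ->
  `|x * z - y * w| <= 2 * (al * be).
Proof.
move=> Hx Hy Hz Hw; apply: le_trans (ler_normB _ _) _.
have := prodb Hx Hz; have := prodb Hy Hw; lra.
Qed.

Lemma dotb (p q : 'cV[R]_3) al be : (forall k, `|p k 0| <= al) -> (forall k, `|q k 0| <= be) ->
  `|dot3 p q| <= 3 * (al * be).
Proof.
move=> Hp Hq; rewrite dot3E.
have := prodb (Hp 0) (Hq 0); have := prodb (Hp 1) (Hq 1); have := prodb (Hp 2) (Hq 2).
have := ler_normD (p 0 0 * q 0 0 + p 1 0 * q 1 0) (p 2 0 * q 2 0).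
have := ler_normD (p 0 0 * q 0 0) (p 1 0 * q 1 0).
lra.
Qed.
Arguments dotb {p q al be}.

Lemma divb (x n M : R) : 0 < n -> `|x| <= M * n -> `|x / n| <= M.
Proof.
move=> Hn Hx; rewrite normrM normfV (gtr0_norm Hn) ler_pdivrMr //.
Qed.

Lemma final_alg (n s V ck cl dck dcl ds : R) : 0 < n -> n ^+ 2 = 2 * s ->
  `|ck| <= 2 * (1 * n) -> `|cl| <= 2 * (1 * n) -> `|dck| <= 4 * V -> `|dcl| <= 4 * V ->
  `|ds| <= 6 * (V * n) ->
  `|(ck * cl) * (- s^-2 * ds) + s^-1 * (ck * dcl + cl * dck)| <= 128 * V / n.
Proof.
move=> Hn Hs Hck Hcl Hdck Hdcl Hds.
have V0 : 0 <= V by have := normr_ge0 dck; lra.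
have Hn0 : n != 0 by rewrite gt_eqF.
have Hs0 : s != 0.
  apply/eqP => E; move: Hs; rewrite E mulr0 => /eqP; rewrite expf_eq0 /= (negbTE Hn0).
  by [].
have gk := @divb ck n 2 Hn ltac:(lra).
have gl := @divb cl n 2 Hn ltac:(lra).
have dd := @divb ds n (6 * V) Hn ltac:(lra).
have -> : (ck * cl) * (- s^-2 * ds) + s^-1 * (ck * dcl + cl * dck) =
   n^-1 * (- 4 * ((ck / n) * (cl / n) * (ds / n)) + 2 * ((ck / n) * dcl + (cl / n) * dck)).
  have -> : s = n ^+ 2 / 2 by rewrite Hs; field.
  by field; rewrite Hn0.
rewrite normrM normfV (gtr0_norm Hn) mulrC; apply: ler_wpM2r; first by rewrite invr_ge0 ltW.
have P1 := prodb (prodb gk gl) dd.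
have P2 := prodb gk Hdcl.
have P3 := prodb gl Hdck.
have := ler_normD (- 4 * ((ck / n) * (cl / n) * (ds / n))) (2 * ((ck / n) * dcl + (cl / n) * dck)).
have := ler_normD ((ck / n) * dcl) ((cl / n) * dck).
rewrite !normrM !normrN (ger0_norm (ler0n _ 4)) (ger0_norm (ler0n _ 2)).
rewrite !normrM in P1 P2 P3.
lra.
Qed.

Lemma cross_b (p q : 'cV[R]_3) al be k : (forall k, `|p k 0| <= al) -> (forall k, `|q k 0| <= be) ->
  `|cross3 p q k 0| <= 2 * (al * be).
Proof.
move=> Hp Hq; rewrite mxE.
by case: (ord3_cases k) => [->|[->|->]] /=; apply: crossb.
Qed.
Arguments cross_b {p q al be} k.

Lemma dot_sym (p q : 'cV[R]_3) : dot3 p q = dot3 q p.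
Proof. rewrite !dot3E; ring. Qed.

Lemma entry_bound (a b da db : 'cV[R]_3) (V : R) :
  enorm3 a = 1 -> enorm3 b = 1 -> dot3 da a = 0 -> dot3 db b = 0 ->
  enorm3 da <= V -> enorm3 db <= V -> a + b != 0 ->
  forall k l, `|dPent a b da db k l| <= 128 * V / enorm3 (a + b).
Proof.
move=> Ha Hb Hda Hdb Vda Vdb Hw k l.
set w := a + b.
have Hn := enorm_gt0 Hw.
have Hs : enorm3 w ^+ 2 = 2 * (1 + dot3 a b).
  rewrite enorm_sq.
  have := unit_dot Ha; have := unit_dot Hb.
  rewrite /w !dot3E !mxE => H1 H2; nra.
have ca : forall k, `|a k 0| <= 1 by move=> i; rewrite -Ha coord_le.
have cb : forall k, `|b k 0| <= 1 by move=> i; rewrite -Hb coord_le.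
have cda : forall k, `|da k 0| <= V by move=> i; apply: le_trans (coord_le _ _) Vda.
have cdb : forall k, `|db k 0| <= V by move=> i; apply: le_trans (coord_le _ _) Vdb.
have cw : forall k, `|w k 0| <= enorm3 w by move=> i; apply: coord_le.
have Ecw : cross3 a b = cross3 a w.
  apply/matrixP => i j; rewrite !mxE.
  by case: (ord3_cases i) => [->|[->|->]] /=; rewrite ?mxE; ring.
have cc : forall k, `|cross3 a b k 0| <= 2 * (1 * enorm3 w).
  by move=> i; rewrite Ecw; apply: cross_b.
have cdc : forall k, `|(cross3 da b + cross3 a db) k 0| <= 4 * V.
  move=> i; rewrite mxE.
  have := cross_b i cda cb; have := cross_b i ca cdb.
  have := ler_normD (cross3 da b i 0) (cross3 a db i 0). lra.
have Eds : dot3 da b + dot3 a db = dot3 da w + dot3 w db.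
  move: Hda Hdb; rewrite /w !dot3E !mxE => H1 H2. lra.
have cds : `|dot3 da b + dot3 a db| <= 6 * (V * enorm3 w).
  rewrite Eds; have := dotb cda cw; have := dotb cw cdb.
  have := ler_normD (dot3 da w) (dot3 w db). lra.
rewrite /dPent /=.
exact: final_alg.
Qed.

Lemma opnorm_le (A : 'M[R]_3) M : (forall k l, `|A k l| <= M) -> opnorm3 A <= 9 * M.
Proof.
move=> HA; apply: ge_sup.
  exists (enorm3 (A *m 0)), 0 => //=.
  by rewrite /enorm3 dot3E !mxE /= !mulr0 !addr0 sqrtr0.
move=> y [u /= Hu <-].
apply: le_trans (enorm_le_sum _) _.
have cu : forall l, `|u l 0| <= 1 by move=> l; apply: le_trans (coord_le _ _) Hu.
have row : forall k, `|(A *m u) k 0| <= 3 * (M * 1).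
  move=> k; rewrite mxE sum3.
  have := prodb (HA k 0) (cu 0); have := prodb (HA k 1) (cu 1); have := prodb (HA k 2) (cu 2).
  have := ler_normD (A k 0 * u 0 0 + A k 1 * u 1 0) (A k 2 * u 2 0).
  have := ler_normD (A k 0 * u 0 0) (A k 1 * u 1 0).
  lra.
have := row 0; have := row 1; have := row 2. lra.
Qed.


Lemma s_pos (a b : 'cV[R]_3) : enorm3 a = 1 -> enorm3 b = 1 -> a + b != 0 -> 0 < 1 + dot3 a b.
Proof.
move=> Ha Hb Hw.
have Hn := enorm_gt0 Hw.
have Hs : enorm3 (a + b) ^+ 2 = 2 * (1 + dot3 a b).
  rewrite enorm_sq.
  have := unit_dot Ha; have := unit_dot Hb.
  rewrite !dot3E !mxE => H1 H2; nra.
have : 0 < enorm3 (a + b) ^+ 2 by rewrite exprn_gt0.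
lra.
Qed.

Lemma derive_P (a b : R -> 'cV[R]_3) (da db : 'cV[R]_3) (t : R) :
  is_derive t 1 a da -> is_derive t 1 b db -> 1 + dot3 (a t) (b t) != 0 ->
  derive1 (fun s => Pmat (a s) (b s)) t = \matrix_(k, l) dPent (a t) (b t) da db k l.
Proof.
move=> Ha Hb Hs.
have Hd : derivable (fun s => Pmat (a s) (b s)) t 1.
  apply/derivable_mxP => k l; have H := isd_P _ _ _ _ _ k l Ha Hb Hs; move: H => [H _]; exact: H.
rewrite derive1E derive_mx //; apply/matrixP => k l; rewrite !mxE.
exact: (@derive_val _ _ _ _ _ _ _ (isd_P _ _ _ _ _ k l Ha Hb Hs)).
Qed.

End S.

Theorem lemmaB1 :
  forall (R : realType), exists C : R, 0 < C /\
  forall (N : nat) (I : set R) (Vmax : R)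
         (x v : 'I_N -> R -> 'cV[R]_3),
  open I -> is_interval I -> 0 <= Vmax ->
  (forall i t, I t -> is_derive t 1 (x i) (v i t)) ->
  (forall i t, I t -> enorm3 (x i t) = 1) ->
  (forall i t, I t -> dot3 (v i t) (x i t) = 0) ->
  (forall i t, I t -> enorm3 (v i t) <= Vmax) ->
  (forall i j t, I t -> x i t + x j t != 0) ->
  forall i j t, I t ->
    opnorm3 (derive1 (fun s => Pmat (x i s) (x j s)) t)
      <= C / enorm3 (x i t + x j t) * Vmax.
Proof.
move=> R; exists 1152; split; first by rewrite ltr0n.
move=> N I Vmax x v _ _ V0 Hd Hn Hdot HV Hne i j t It.
have Hs := @s_pos R _ _ (Hn i t It) (Hn j t It) (Hne i j t It).
rewrite (@derive_P R _ _ _ _ _ (Hd i t It) (Hd j t It) (lt0r_neq0 Hs)).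
apply: le_trans (@opnorm_le R _ (128 * Vmax / enorm3 (x i t + x j t)) _) _.
  move=> k l; rewrite mxE.
  by apply: entry_bound; auto.
by rewrite le_eqVlt; apply/orP; left; apply/eqP; ring.
Qed.
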